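(* Let $X$ be a set and let $\mathcal F:X^4\to\mathbb R$ satisfy, for all $x_1,x_2,x_3,x_4,w\in X$: $$\mathcal F(x_1,x_2,x_3,x_4)+\mathcal F(x_2,x_3,x_1,x_4)+\mathcal F(x_3,x_1,x_2,x_4)=0,$$ $$\mathcal F(x_2,x_1,x_3,x_4)=\mathcal F(x_1,x_2,x_4,x_3)=-\mathcal F(x_1,x_2,x_3,x_4),$$ $$\mathcal F(x_1,x_2,x_3,x_4)=\mathcal F(x_1,w,x_3,x_4)+\mathcal F(w,x_2,x_3,x_4).$$ Then there exists a function $g:X^2\to\mathbb R$ such that for all $x_1,x_2,x_3,x_4\in X$ $$\mathcal F(x_1,x_2,x_3,x_4)=g(x_1,x_3)-g(x_1,x_4)-g(x_2,x_3)+g(x_2,x_4).$$ Moreover, for any fixed $a,b\in X$ there is exactly one such $g$ satisfying the normalization $g(a,w)=g(w,b)=0$ for all $w\in X$ (namely $g(u,v)=\mathcal F(u,a,v,b)$). *)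

(* Defs.v *)
From Stdlib Require Import Reals.
Open Scope R_scope.

Definition F_cyclic {X : Type} (F : X -> X -> X -> X -> R) : Prop :=
  forall x1 x2 x3 x4,
    F x1 x2 x3 x4 + F x2 x3 x1 x4 + F x3 x1 x2 x4 = 0.

Definition F_antisym {X : Type} (F : X -> X -> X -> X -> R) : Prop :=
  forall x1 x2 x3 x4,
    F x2 x1 x3 x4 = - F x1 x2 x3 x4 /\ F x1 x2 x4 x3 = - F x1 x2 x3 x4.

Definition F_additive {X : Type} (F : X -> X -> X -> X -> R) : Prop :=
  forall x1 x2 x3 x4 w,
    F x1 x2 x3 x4 = F x1 w x3 x4 + F w x2 x3 x4.

Definition represents {X : Type} (F : X -> X -> X -> X -> R) (g : X -> X -> R) : Prop :=
  forall x1 x2 x3 x4,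
    F x1 x2 x3 x4 = g x1 x3 - g x1 x4 - g x2 x3 + g x2 x4.

Definition normalized {X : Type} (a b : X) (g : X -> X -> R) : Prop :=
  forall w, g a w = 0 /\ g w b = 0.

(* Main.v *)
Require Import Defs.
From Stdlib Require Import Reals Lra Classical FunctionalExtensionality.
Open Scope R_scope.

Lemma pair_sym (X : Type) (F : X -> X -> X -> X -> R)
  (Hcyc : F_cyclic F) (Hanti : F_antisym F) :
  forall a b c d, F a b c d = F c d a b.
Proof.
  intros a b c d.
  pose proof (Hcyc a b c d) as Y_1. pose proof (Hcyc b c d a) as Y_2.
  pose proof (Hcyc c d a b) as Y_3. pose proof (Hcyc d a b c) as Y_4.
  repeat match goal with
  | |- context [F ?p ?q ?r ?s] => fail
  end.
  destruct (Hanti a b c d) as [A1 A2]. destruct (Hanti b c a d) as [B1 B2].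
  destruct (Hanti c a b d) as [C1 C2]. destruct (Hanti b c d a) as [D1 D2].
  destruct (Hanti c d b a) as [E1 E2]. destruct (Hanti d b c a) as [G1 G2].
  destruct (Hanti c d a b) as [H1 H2]. destruct (Hanti d a c b) as [I1 I2].
  destruct (Hanti a c d b) as [J1 J2]. destruct (Hanti d a b c) as [K1 K2].
  destruct (Hanti a b d c) as [L1 L2]. destruct (Hanti b d a c) as [M1 M2].
  destruct (Hanti a d b c) as [N1 N2]. destruct (Hanti b d c a) as [O1 O2].
  destruct (Hanti c a d b) as [P1 P2]. destruct (Hanti d b a c) as [Q1 Q2].
  destruct (Hanti a c b d) as [R1 R2]. destruct (Hanti b a c d) as [S1 S2].
  destruct (Hanti d c a b) as [T1 T2]. destruct (Hanti c b d a) as [U1 U2].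
  destruct (Hanti a d c b) as [V1 V2]. destruct (Hanti c b a d) as [W1 W2].
  destruct (Hanti b a d c) as [Y1 Y2]. destruct (Hanti d c b a) as [Z1 Z2].
  lra.
Qed.

Lemma repr_formula (X : Type) (F : X -> X -> X -> X -> R)
  (Hcyc : F_cyclic F) (Hanti : F_antisym F) (Hadd : F_additive F) (a b : X) :
  represents F (fun u v => F u a v b).
Proof.
  intros x1 x2 x3 x4.
  assert (Hadd2 : forall p q r s, F p q r s = F p q r b + F p q b s).
  { intros p q r s. rewrite (pair_sym X F Hcyc Hanti p q r s), (Hadd r s p q b).
    rewrite <- (pair_sym X F Hcyc Hanti p q r b), <- (pair_sym X F Hcyc Hanti p q b s).
    reflexivity. }
  rewrite (Hadd x1 x2 x3 x4 a).
  destruct (Hanti x2 a x3 x4) as [A1 _]. rewrite A1.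
  rewrite (Hadd2 x1 a x3 x4), (Hadd2 x2 a x3 x4).
  destruct (Hanti x1 a b x4) as [_ B2]. destruct (Hanti x2 a b x4) as [_ C2].
  lra.
Qed.

Theorem mainTheorem12 (X : Type) (F : X -> X -> X -> X -> R)
  (Hcyc : F_cyclic F) (Hanti : F_antisym F) (Hadd : F_additive F) :
  (exists g : X -> X -> R, represents F g) /\
  (forall a b : X,
     exists! g : X -> X -> R, normalized a b g /\ represents F g) /\
  (forall (a b : X) (g : X -> X -> R),
     normalized a b g -> represents F g ->
     forall u v, g u v = F u a v b).
Proof.
  assert (Huniq : forall (a b : X) (g : X -> X -> R),
     normalized a b g -> represents F g ->
     forall u v, g u v = F u a v b).
  { intros a b g Hn Hr u v. rewrite (Hr u a v b).
    destruct (Hn v) as [E1 _]. destruct (Hn u) as [_ E2].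
    destruct (Hn b) as [E3 _]. lra. }
  split; [|split; [|exact Huniq]].
  - destruct (classic (inhabited X)) as [[a]|Hn].
    + exists (fun u v => F u a v a). apply repr_formula; auto.
    + exists (fun _ _ => 0). intros x1. exfalso. apply Hn. exact (inhabits x1).
  - intros a b. exists (fun u v => F u a v b). split.
    + split.
      * intro w. destruct (Hanti a a w b) as [A1 _]. destruct (Hanti w a b b) as [_ A2].
        split; lra.
      * apply repr_formula; auto.
    + intros g [Hn Hr]. apply functional_extensionality; intro u.
      apply functional_extensionality; intro v. symmetry. exact (Huniq a b g Hn Hr u v).
Qed.
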